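(* Let $\mathcal{A}$ be a finite alphabet with $\#\mathcal{A}\ge2$. For every irreducible pair $\mathbf{p}$ on $\mathcal{A}$, $d_{\mathrm{cycle}}(\mathbf{p},\mathrm{Std}(\mathcal{A}))\le\#\mathcal{A}-2$.
   Context: Let $n=\#\mathcal{A}$. A pair is $\mathbf{p}=(p_0,p_1)$ with $p_0,p_1:\mathcal{A}\to\{1,\dots,n\}$ bijections. Irreducible: $p_0^{-1}\{1,\dots,k\}\ne p_1^{-1}\{1,\dots,k\}$ for $1\le k<n$. Rauzy move of type $\varepsilon$: $\varepsilon\mathbf{p}=(p'_0,p'_1)$, $p'_\varepsilon=p_\varepsilon$, and for $z=p_\varepsilon^{-1}(n)$, $p'_{1-\varepsilon}(b)=p_{1-\varepsilon}(b)$ if $p_{1-\varepsilon}(b)\le p_{1-\varepsilon}(z)$, $=p_{1-\varepsilon}(b)+1$ if $p_{1-\varepsilon}(z)<p_{1-\varepsilon}(b)<n$, $=p_{1-\varepsilon}(z)+1$ if $p_{1-\varepsilon}(b)=n$. A Rauzy path is a sequence of Rauzy moves, written $\varepsilon_1^{k_1}\cdots\varepsilon_m^{k_m}$ with $k_i>0$ and $\varepsilon_{i+1}=1-\varepsilon_i$ (each $\varepsilon_i^{k_i}$ meaning $k_i$ consecutive moves of type $\varepsilon_i$); its cycle length is $m$. For pairs $\mathbf{p},\mathbf{p}'$ in the same Rauzy class, $d_{\mathrm{cycle}}(\mathbf{p},\mathbf{p}')=0$ if $\mathbf{p}=\mathbf{p}'$ and otherwise the minimum cycle length of a Rauzy path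 from $\mathbf{p}$ to $\mathbf{p}'$. $\mathrm{Std}(\mathcal{A})$ is the set of standard pairs, i.e. those with $p_0^{-1}(1)=p_1^{-1}(n)$ and $p_1^{-1}(1)=p_0^{-1}(n)$, and $d_{\mathrm{cycle}}(\mathbf{p},\mathrm{Std}(\mathcal{A}))$ is the minimum of $d_{\mathrm{cycle}}(\mathbf{p},\mathbf{q})$ over standard $\mathbf{q}$ reachable from $\mathbf{p}$ by Rauzy moves. *)

(* Defs.v *)
From mathcomp Require Import all_boot.
Set Implicit Arguments. Unset Strict Implicit. Unset Printing Implicit Defensive.

Section Rauzy.
Variable A : finType.

(* A pair p = (p_0, p_1), each p_e : A -> nat, intended to be bijections onto {1,...,#|A|}. *)
Definition rpair := ((A -> nat) * (A -> nat))%type.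

Definition is_bij_onto (f : A -> nat) : Prop :=
  injective f /\ (forall a, 1 <= f a <= #|A|) /\
  (forall k, 1 <= k <= #|A| -> exists a, f a = k).

Definition is_pair (p : rpair) : Prop := is_bij_onto p.1 /\ is_bij_onto p.2.

Definition irreducible (p : rpair) : Prop :=
  forall k, 1 <= k < #|A| -> [set a | p.1 a <= k] <> [set a | p.2 a <= k].

(* New "other" row: pe = p_eps (unchanged), po = p_{1-eps}; z = pe^{-1}(n). *)
Definition rauzy_other (pe po : A -> nat) : A -> nat :=
  match [pick z | pe z == #|A|] with
  | Some z => fun b =>
      if po b <= po z then po b
      else if po b < #|A| then (po b).+1
      else (po z).+1
  | None => po
  end.

(* Rauzy move of type eps: false = type 0, true = type 1. *)
Definition rauzy_move (eps : bool) (p : rpair) : rpair :=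
  if eps then (rauzy_other p.2 p.1, p.2) else (p.1, rauzy_other p.1 p.2).

Definition rauzy_path (s : seq bool) (p : rpair) : rpair :=
  foldl (fun q e => rauzy_move e q) p s.

(* cycle length: number of maximal blocks eps_i^{k_i} of the sequence of moves. *)
Definition cycle_length (s : seq bool) : nat :=
  match s with
  | [::] => 0
  | x :: t => (count id (pairmap (fun a b => a != b) x t)).+1
  end.

Definition pair_eq (p q : rpair) : Prop :=
  (forall a, p.1 a = q.1 a) /\ (forall a, p.2 a = q.2 a).

Definition standard (p : rpair) : Prop :=
  (forall a, p.1 a = 1 <-> p.2 a = #|A|) /\ (forall a, p.2 a = 1 <-> p.1 a = #|A|).

(* d_cycle(p, q) <= d, for q reachable from p:
   either p = q (distance 0) or some Rauzy path from p to q has cycle length <= d. *)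
Definition dcycle_le (p q : rpair) (d : nat) : Prop :=
  pair_eq p q \/ exists s, pair_eq (rauzy_path s p) q /\ cycle_length s <= d.

(* d_cycle(p, Std(A)) <= d : the minimum over standard q reachable from p is <= d,
   i.e. some standard q reachable from p has d_cycle(p,q) <= d. *)
Definition dcycle_std_le (p : rpair) (d : nat) : Prop :=
  exists q, (exists s, pair_eq (rauzy_path s p) q) /\ standard q /\ dcycle_le p q d.

End Rauzy.

(* Main.v *)
Require Import Defs.
From mathcomp Require Import all_boot zify.
Set Implicit Arguments. Unset Strict Implicit. Unset Printing Implicit Defensive.

Section H.
Variable A : finType.
Local Notation n := #|A|.
Local Notation rp := (rpair A).

Definition swap (p : rp) : rp := (p.2, p.1).

Lemma card_le (f : A -> nat) k : is_bij_onto f -> k <= n -> #|[set a | f a <= k]| = k.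
Proof.
case=> Hi [Hr Hs]; elim: k => [|k IH] Hk.
  apply/eqP; rewrite cards_eq0; apply/eqP/setP => a; rewrite !inE.
  by have := Hr a; case: (f a).
have [a0 Ha0] : exists a0, f a0 = k.+1 by apply: Hs; lia.
have -> : [set a | f a <= k.+1] = a0 |: [set a | f a <= k].
  apply/setP => a; rewrite !inE.
  case E: (a == a0); first by move/eqP: E => ->; rewrite Ha0 leqnn.
  rewrite /=; apply/idP/idP => H; last lia.
  have : f a != k.+1.
    by apply/eqP => Hf; move/negbT: E; rewrite (Hi _ _ (etrans Hf (esym Ha0))) eqxx.
  lia.
rewrite cardsU1 IH; last lia.
by rewrite inE Ha0 ltnn.
Qed.

Lemma L_irr (p : rp) k : is_pair p -> k <= n ->
  [set a | p.1 a <= k] <> [set a | p.2 a <= k] -> exists x, p.1 x <= k < p.2 x.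
Proof.
case=> H1 H2 Hk Hne.
case: (boolP [exists x, (p.1 x <= k) && (k < p.2 x)]) => [/existsP [x /andP [? ?]]|H].
  by exists x; apply/andP.
exfalso; apply: Hne; apply/eqP; rewrite eqEcard !card_le // leqnn andbT.
apply/subsetP => a; rewrite !inE => Ha.
move/existsPn: H => /(_ a); rewrite Ha /= -leqNgt; done.
Qed.

Lemma other_eq (pe po : A -> nat) t : is_bij_onto pe -> pe t = n ->
  rauzy_other pe po = fun b => if po b <= po t then po b
      else if po b < n then (po b).+1 else (po t).+1.
Proof.
case=> Hi _ Ht; rewrite /rauzy_other; case: pickP => [z /eqP Hz|H].
  by have -> : z = t by apply: Hi; rewrite Hz Ht.
by have := H t; rewrite Ht eqxx.
Qed.

Lemma bij_other (po : A -> nat) c : is_bij_onto po -> (exists t, po t = c) ->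
  is_bij_onto (fun b => if po b <= c then po b
      else if po b < n then (po b).+1 else c.+1).
Proof.
case=> Hi [Hr Hs] [t Ht].
have Hc : 1 <= c <= n by rewrite -Ht.
set f := fun b => _.
have Hf : forall b, (po b <= c /\ f b = po b) \/ (c < po b < n /\ f b = (po b).+1)
   \/ (po b = n /\ c < n /\ f b = c.+1).
  move=> b; rewrite /f; have := Hr b.
  case: (leqP (po b) c) => Hx; [left|right]; first by [].
  case: (ltnP (po b) n) => Hx'; [left|right]; lia.
split; [|split].
- move=> x y Hxy; apply: Hi.
  have := Hr x; have := Hr y.
  case: (Hf x) => [[? ?]|[[? ?]|[? [? ?]]]]; case: (Hf y) => [[? ?]|[[? ?]|[? [? ?]]]]; lia.
- move=> x; have := Hr x; case: (Hf x) => [[? ?]|[[? ?]|[? [? ?]]]]; lia.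
- move=> k Hk.
  case: (leqP k c) => Hkc.
    have [a Ha] := Hs k Hk; exists a.
    case: (Hf a) => [[? ?]|[[? ?]|[? [? ?]]]]; lia.
  case: (eqVneq k c.+1) => Hk1.
    have [a Ha] : exists a, po a = n by apply: Hs; lia.
    exists a.
    case: (Hf a) => [[? ?]|[[? ?]|[? [? ?]]]]; lia.
  have [a Ha] : exists a, po a = k.-1 by apply: Hs; lia.
  exists a.
  case: (Hf a) => [[? ?]|[[? ?]|[? [? ?]]]]; lia.
Qed.


Lemma move0 (p : rp) t : is_pair p -> p.1 t = n ->
  is_pair (rauzy_move false p) /\ (rauzy_move false p).1 = p.1 /\
  (forall y, p.2 y <= p.2 t -> (rauzy_move false p).2 y = p.2 y) /\
  (forall y, p.2 t < p.2 y < n -> (rauzy_move false p).2 y = (p.2 y).+1).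
Proof.
move=> [H1 H2] Ht /=; rewrite (other_eq _ H1 Ht).
split; first by split => //; apply: bij_other => //; exists t.
split => //; split => y Hy; first by rewrite Hy.
by case/andP: Hy => Hy1 Hy2; rewrite leqNgt Hy1 Hy2.
Qed.

Lemma iter0 k (p : rp) t : is_pair p -> p.1 t = n ->
  is_pair (rauzy_path (nseq k false) p) /\ (rauzy_path (nseq k false) p).1 = p.1 /\
  (forall y, p.2 y <= p.2 t -> (rauzy_path (nseq k false) p).2 y = p.2 y) /\
  (forall x, p.2 t < p.2 x -> p.2 x + k <= n -> (rauzy_path (nseq k false) p).2 x = p.2 x + k).
Proof.
elim: k p => [|k IH] p Hp Ht.
  by split => //; split => //; split => // x _ _; rewrite addn0.
have E : rauzy_path (nseq k.+1 false) p = rauzy_path (nseq k false) (rauzy_move false p) by [].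
rewrite E.
have [Hp' [E1 [E2 E3]]] := move0 Hp Ht.
have Ht' : (rauzy_move false p).1 t = n by rewrite E1.
have [Hq [F1 [F2 F3]]] := IH _ Hp' Ht'.
have Et : (rauzy_move false p).2 t = p.2 t := E2 t (leqnn _).
split => //; split; first by rewrite F1 E1.
split.
  move=> y Hy; have Ey := E2 y Hy; rewrite F2; [exact: Ey | by rewrite Ey Et].
move=> x Hx Hk.
have Ex : (rauzy_move false p).2 x = (p.2 x).+1 by apply: E3; lia.
rewrite F3; rewrite ?Ex ?Et; lia.
Qed.

Lemma prefix_eq (f g : A -> nat) c : is_bij_onto f -> is_bij_onto g ->
  (forall y, f y <= c -> g y = f y) -> forall a k, k <= c -> (g a <= k) = (f a <= k).
Proof.
move=> [Hfi [Hfr Hfs]] [Hgi [Hgr Hgs]] Hfg a k Hk.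
case: (leqP (f a) c) => Ha; first by rewrite Hfg.
apply/idP/idP => H; last lia.
have [y Hy] : exists y, f y = g a by apply: Hfs; have := Hgr a; lia.
have Ey : g y = f y by apply: Hfg; lia.
have Eya : y = a by apply: Hgi; lia.
subst; lia.
Qed.

Lemma path_neg s (p : rp) : rauzy_path (map negb s) p = swap (rauzy_path s (swap p)).
Proof.
elim: s p => [|e s IH] p; first by case: p.
change (rauzy_path (map negb s) (rauzy_move (~~e) p) = swap (rauzy_path s (rauzy_move e (swap p)))).
rewrite IH; congr (swap (rauzy_path s _)).
by case: e; case: p.
Qed.

Lemma path_cat u v (p : rp) : rauzy_path (u ++ v) p = rauzy_path v (rauzy_path u p).
Proof. exact: foldl_cat. Qed.

Lemma std_swap (q : rp) : standard q -> standard (swap q).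
Proof. by case=> H1 H2; split. Qed.

Lemma pair_swap (q : rp) : is_pair q -> is_pair (swap q).
Proof. by case=> H1 H2; split. Qed.

Lemma std_of (q : rp) a t : is_pair q -> q.1 a = 1 -> q.2 a = n -> q.1 t = n -> q.2 t = 1 ->
  standard q.
Proof.
move=> [[H1i _] [H2i _]] Ha1 Ha2 Ht1 Ht2; split => x; split => Hx.
- by have -> : x = a by apply: H1i; rewrite Hx Ha1.
- by have -> : x = a by apply: H2i; rewrite Hx Ha2.
- by have -> : x = t by apply: H2i; rewrite Hx Ht2.
- by have -> : x = t by apply: H1i; rewrite Hx Ht1.
Qed.

End H.

Lemma cl_neg s : cycle_length (map negb s) = cycle_length s.
Proof.
case: s => [|x t] //=; congr S; congr count.
elim: t x => [|y t IH] x //=.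
by rewrite IH; case: x; case: y.
Qed.

Lemma cl_cons e s : cycle_length (e :: s) <= (cycle_length s).+1.
Proof.
case: s => [|y s] //=.
by case: (e != y).
Qed.

Lemma cl_dup e u : cycle_length (e :: e :: u) = cycle_length (e :: u).
Proof. by rewrite /= eqxx. Qed.

Lemma cl_nseq k e s : cycle_length (nseq k e ++ s) <= (cycle_length s).+1.
Proof.
elim: k => [|k IH]; first exact: leqnSn.
case: k IH => [|k] IH; first exact: cl_cons.
rewrite cl_dup; exact: IH.
Qed.

Section C.
Variable A : finType.
Local Notation n := #|A|.
Local Notation rp := (rpair A).

Lemma claim N : forall c (p : rp) t b, c <= N -> is_pair p -> p.1 t = n -> p.2 b = n ->
  p.2 t = c ->
  (forall k, 1 <= k < c -> [set a | p.1 a <= k] <> [set a | p.2 a <= k]) ->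
  exists s, standard (rauzy_path s p) /\
    cycle_length s <= (if p.1 b == 1 then c.-1 else c).
Proof.
elim: N => [|N IH] c p t b HcN Hp Ht Hb Htc Hirr;
  have [[H1i [H1r H1s]] [H2i [H2r H2s]]] := Hp;
  have Hc1 : 1 <= c by have := H2r t; rewrite Htc; lia.
  lia.
have Hcn : c <= n by have := H2r t; rewrite Htc; lia.
case: (eqVneq c 1) => Hc.
  case: (eqVneq (p.1 b) 1) => Ha.
    exists [::]; split; last by [].
    by apply: (std_of (a:=b) (t:=t)) => //; rewrite Htc.
  have Hn2 : 2 <= n by have := H1r b; lia.
  have [al Hal] : exists al, p.1 al = 1 by apply: H1s; lia.
  have Hne : p.2 al <> p.2 t by move/H2i => E; subst; lia.
  have Hlt : p.2 t < p.2 al by have := H2r al; lia.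
  have [Hq [Q1 [Q2 Q3]]] := iter0 (n - p.2 al) Hp Ht.
  exists (nseq (n - p.2 al) false); split.
    apply: (std_of (a:=al) (t:=t) Hq); rewrite ?Q1 //.
    - rewrite Q3 //; have := H2r al; lia.
    - by rewrite Q2 // Htc.
  have := cl_nseq (n - p.2 al) false [::]; rewrite cats0 /=; lia.
have [x /andP [Hx1 Hx2]] : exists x, (p.1 x <= c.-1 < p.2 x).
  have Hk1 : 1 <= c.-1 < c by lia.
  have Hcn' : c.-1 <= n by lia.
  have [x Hx] := L_irr Hp Hcn' (Hirr _ Hk1); by exists x.
have Hxt : p.2 x <> c.
  move=> E; have Ext : x = t by apply: H2i; rewrite E Htc.
  subst; lia.
case: (eqVneq (p.1 b) 1) => Ha.
  have [be Hbe] : exists be, p.2 be = 1 by apply: H2s; lia.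
  have Hbb : be <> b by move=> E; subst; lia.
  have Hbe1 : p.1 be <> 1 by rewrite -Ha => /H1i.
  have Hsp := pair_swap Hp.
  have Hsb : (swap p).1 b = n by [].
  have [Hq [Q1 [Q2 Q3]]] := iter0 (n - p.1 be) Hsp Hsb.
  exists (nseq (n - p.1 be) true); split.
    have E : rauzy_path (nseq (n - p.1 be) true) p =
       swap (rauzy_path (nseq (n - p.1 be) false) (swap p)) by rewrite -path_neg map_nseq.
    rewrite E; apply: (std_of (a:=b) (t:=be) (pair_swap Hq)) => /=.
    - by rewrite Q2 //= Ha.
    - by rewrite Q1.
    - have Hlt : p.1 b < p.1 be by have := H1r be; lia.
      have Hle : p.1 be + (n - p.1 be) = n by have := H1r be; lia.
      rewrite Q3; [exact: Hle | exact: Hlt | by rewrite Hle].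
    - by rewrite Q1.
  have := cl_nseq (n - p.1 be) true [::]; rewrite cats0 /=; lia.
have Hxgt : p.2 t < p.2 x by lia.
have [Hq [Q1 [Q2 Q3]]] := iter0 (n - p.2 x) Hp Ht.
set p' := rauzy_path _ p in Hq Q1 Q2 Q3.
have Hp'x : p'.2 x = n by rewrite Q3 //; have := H2r x; lia.
have Hsp := pair_swap Hq.
have HxN : p.1 x <= N by lia.
have Hst : (swap p').2 t = n by rewrite /= Q1.
have Hsx : (swap p').2 x = p.1 x by rewrite /= Q1.
have Hsirr : forall k, 1 <= k < p.1 x ->
   [set a | (swap p').1 a <= k] <> [set a | (swap p').2 a <= k].
  move=> k Hk /= E; apply: (Hirr k); first lia.
  have Hset : [set a | p'.2 a <= k] = [set a | p.2 a <= k].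
    apply/setP => a; rewrite !inE (prefix_eq (f := p.2) (c := c) (proj2 Hp) (proj2 Hq)) //.
      by move=> y Hy; rewrite Q2 // Htc.
    lia.
  by rewrite -Hset E Q1.
have [s' [Hs' Hl']] := IH (p.1 x) (swap p') x t HxN Hsp Hp'x Hst Hsx Hsirr.
exists (nseq (n - p.2 x) false ++ map negb s'); split.
  by rewrite path_cat path_neg; apply: std_swap.
have E1 : (swap p').1 t = c by rewrite /= Q2 ?Htc.
move: Hl'; rewrite E1 (negbTE Hc) => Hl'.
have := cl_nseq (n - p.2 x) false (map negb s'); rewrite cl_neg; lia.
Qed.

End C.

Theorem lemma2p26 (A : finType) (p : rpair A) :
  2 <= #|A| -> is_pair p -> irreducible p -> dcycle_std_le p (#|A| - 2).
Proof.
move=> Hn Hp Hirr.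
suff [s [Hs Hl]] : exists s, standard (rauzy_path s p) /\ cycle_length s <= #|A| - 2.
  exists (rauzy_path s p); split; first by exists s.
  split => //; right; exists s; split => //.
have [[H1i [H1r H1s]] [H2i [H2r H2s]]] := Hp.
have [t Ht] : exists t, p.1 t = #|A| by apply: H1s; lia.
have [b Hb] : exists b, p.2 b = #|A| by apply: H2s; lia.
have Htb : t <> b.
  move=> E; subst.
  have Hk1 : 1 <= #|A|.-1 < #|A| by lia.
  have Hk2 : #|A|.-1 <= #|A| by lia.
  have [x /andP [Hx1 Hx2]] := L_irr Hp Hk2 (Hirr _ Hk1).
  have Ex : x = b by apply: H2i; have := H2r x; lia.
  subst; lia.
have Hct : p.2 t < #|A|.
  have : p.2 t <> #|A| by move=> E; apply: Htb; apply: H2i; rewrite E Hb.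
  have := H2r t; lia.
have Hab : p.1 b < #|A|.
  have : p.1 b <> #|A| by move=> E; apply: Htb; apply: H1i; rewrite E Ht.
  have := H1r b; lia.
case: (leqP (p.2 t) (#|A| - 2)) => Hc.
  have Hi2 : forall k, 1 <= k < p.2 t -> [set a | p.1 a <= k] <> [set a | p.2 a <= k].
    by move=> k Hk; apply: Hirr; lia.
  have [s [Hs Hl]] := claim (leqnn _) Hp Ht Hb (erefl _) Hi2.
  exists s; split => //; move: Hl; case: ifP; lia.
case: (leqP (p.1 b) (#|A| - 2)) => Ha.
  have Hirr' : forall k, 1 <= k < p.1 b ->
     [set a | (swap p).1 a <= k] <> [set a | (swap p).2 a <= k].
    move=> k Hk E; have Hk' : 1 <= k < #|A| by lia.
    exact: (Hirr k Hk' (esym E)).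
  have Esb : (swap p).2 b = p.1 b by [].
  have [s [Hs Hl]] := claim (leqnn _) (pair_swap Hp) Hb Ht Esb Hirr'.
  exists (map negb s); rewrite path_neg cl_neg; split; first by apply: std_swap.
  move: Hl; case: ifP; lia.
case: (eqVneq #|A| 2) => Hn2.
  have Hi2 : forall k, 1 <= k < p.2 t -> [set a | p.1 a <= k] <> [set a | p.2 a <= k].
    by move=> k Hk; apply: Hirr; lia.
  have [s [Hs Hl]] := claim (leqnn _) Hp Ht Hb (erefl _) Hi2.
  exists s; split => //; move: Hl.
  have -> : p.1 b == 1 by apply/eqP; have := H1r b; lia.
  lia.
have Hk1 : 1 <= #|A| - 2 < #|A| by lia.
have Hk2 : #|A| - 2 <= #|A| by lia.
have [x /andP [Hx1 Hx2]] := L_irr Hp Hk2 (Hirr _ Hk1).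
have Hxb : x <> b by move=> E; subst; lia.
have Hxt : x <> t by move=> E; subst; lia.
have : p.2 x <> p.2 b by move/H2i.
have : p.2 x <> p.2 t by move/H2i.
have := H2r x; lia.
Qed.
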